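(* Let $M\in\Lambda$ be a closed $\lambda$-term and $N\in\Lambda$. The following two conditions are equivalent, for every natural number $n$: (1) $M\rightarrow_v^n N$ and $N$ is in $\rightarrow_v$-normal form; (2) $[\![M]\!]\rightarrow^n t$ in $\Phi$ for some term $t$ that is in normal form in $\Phi$ and satisfies $\langle\!\langle t\rangle\!\rangle=N$.
   Context: $\lambda$-terms are $M::=x\mid \lambda x.M\mid MN$, with $x$ ranging over a denumerable set $\Upsilon$ of variables equipped with a fixed total order; $\Lambda$ is the set of all terms. $FV(M)$ is the sequence (without repetitions, ordered by the fixed order on $\Upsilon$) of free variables of $M$; $M$ is closed if this sequence is empty. Values are $V::=x\mid\lambda x.M$. Weak call-by-value reduction $\rightarrow_v$ is the smallest relation such that $(\lambda x.M)V\rightarrow_v M\{V/x\}$ for every value $V$, and such that $M\rightarrow_v N$ implies $ML\rightarrow_v NL$ and $LM\rightarrow_v LN$ (no reduction under $\lambda$). $\rightarrow_v^n$ denotes $n$ steps. The constructor rewrite system $\Phi$ has signature: a binary function symbol $\mathbf{app}$ and, for every $M\in\Lambda$ and $x\in\Upsilon$, a constructor symbol $c_{x,M}$ whose arity is the length of $FV(\lambda x.M)$. Constructor terms are the closed terms built from constructors only. To every $M\in\Lambda$ associate a (possibly open) term $[\![M]\!]$: $[\![x]\!]=x$; $[\![\lambda x.M]\!]=c_{x,M}(x_1,\dots,x_n)$ where $FV(\lambda x.M)=x_1,\dots,x_n$; $[\![MN]\!]=\mathbf{app}([\![M]\!],[\![N]\!])$. The rules of $\Phi$ are all $\mathbf{app}(c_{x,M}(x_1,\dots,x_n),x)\rightarrow[\![M]\!]$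 with $FV(\lambda x.M)=x_1,\dots,x_n$. Rewriting is call-by-value: $t\rightarrow u$ if $u$ is obtained from $t$ by replacing a subterm $l\sigma$ by $r\sigma$, where $l\rightarrow r$ is a rule and the substitution $\sigma$ maps variables to constructor terms. A term is in normal form if no rewrite step applies. To every term $t$ of $\Phi$ associate a $\lambda$-term $\langle\!\langle t\rangle\!\rangle$: $\langle\!\langle x\rangle\!\rangle=x$; $\langle\!\langle \mathbf{app}(u,v)\rangle\!\rangle=\langle\!\langle u\rangle\!\rangle\langle\!\langle v\rangle\!\rangle$; $\langle\!\langle c_{x,M}(t_1,\dots,t_n)\rangle\!\rangle=(\lambda x.M)\{\langle\!\langle t_1\rangle\!\rangle/x_1,\dots,\langle\!\langle t_n\rangle\!\rangle/x_n\}$ where $FV(\lambda x.M)=x_1,\dots,x_n$. *)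

(* Defs.v *)
From mathcomp Require Import all_boot.
Set Implicit Arguments. Unset Strict Implicit. Unset Printing Implicit Defensive.

Inductive term : Type :=
| Var : nat -> term
| Lam : nat -> term -> term
| App : term -> term -> term.

Fixpoint fvs (M : term) : seq nat :=
  match M with
  | Var x => [:: x]
  | Lam x M => [seq y <- fvs M | y != x]
  | App M N => fvs M ++ fvs N
  end.

Definition FV (M : term) : seq nat := sort leq (undup (fvs M)).

Definition closed_term (M : term) : Prop := FV M = [::].

(* simultaneous capture-avoiding substitution; a bound variable is renamed
   (to a fresh one) only when capture would otherwise occur *)
Fixpoint subst (s : nat -> term) (M : term) : term :=
  match M with
  | Var x => s x
  | App M N => App (subst s M) (subst s N)
  | Lam y M' =>
      let avoid := flatten [seq fvs (s w) | w <- FV (Lam y M')] in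
      let z := if y \in avoid then (foldr maxn 0 avoid).+1 else y in
      Lam z (subst (fun w => if w == y then Var z else s w) M')
  end.

Definition subst1 (M : term) (x : nat) (V : term) : term :=
  subst (fun w => if w == x then V else Var w) M.

Definition is_value (M : term) : bool :=
  match M with Var _ | Lam _ _ => true | App _ _ => false end.

Inductive vstep : term -> term -> Prop :=
| vstep_beta x M V : is_value V -> vstep (App (Lam x M) V) (subst1 M x V)
| vstep_appL M N L : vstep M N -> vstep (App M L) (App N L)
| vstep_appR M N L : vstep M N -> vstep (App L M) (App L N).

Definition vnormal (M : term) : Prop := ~ exists N, vstep M N.

Inductive nsteps (A : Type) (R : A -> A -> Prop) : nat -> A -> A -> Prop :=
| nsteps0 a : nsteps R 0 a a
| nstepsS n a b c : R a b -> nsteps R n b c -> nsteps R n.+1 a c.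

(* PCon x M args is the constructor c_{x,M} applied to args *)
Inductive pterm : Type :=
| PVar : nat -> pterm
| PApp : pterm -> pterm -> pterm
| PCon : nat -> term -> seq pterm -> pterm.

Fixpoint pwf (t : pterm) : bool :=
  match t with
  | PVar _ => true
  | PApp u v => pwf u && pwf v
  | PCon x M args => (size args == size (FV (Lam x M))) && all pwf args
  end.

Fixpoint is_cons (t : pterm) : bool :=
  match t with
  | PVar _ => false
  | PApp _ _ => false
  | PCon x M args => (size args == size (FV (Lam x M))) && all is_cons args
  end.

Fixpoint psubst (s : nat -> pterm) (t : pterm) : pterm :=
  match t with
  | PVar x => s x
  | PApp u v => PApp (psubst s u) (psubst s v)
  | PCon x M args => PCon x M (map (psubst s) args)
  end.

Fixpoint enc (M : term) : pterm :=
  match M with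
  | Var x => PVar x
  | Lam x M' => PCon x M' (map PVar (FV (Lam x M')))
  | App M N => PApp (enc M) (enc N)
  end.

(* rule instance app(c_{x,M}(x_1..x_n), x) sigma -> [[M]] sigma, where
   sigma maps x_i to us_i and x to v (constructor terms) *)
Inductive pstep : pterm -> pterm -> Prop :=
| pstep_rule x M us v :
    size us = size (FV (Lam x M)) -> all is_cons us -> is_cons v ->
    pstep (PApp (PCon x M us) v)
          (psubst (fun y => if y == x then v
                            else nth (PVar y) us (index y (FV (Lam x M))))
                  (enc M))
| pstep_appL u u' v : pstep u u' -> pstep (PApp u v) (PApp u' v)
| pstep_appR u v v' : pstep v v' -> pstep (PApp u v) (PApp u v')
| pstep_con x M l1 u u' l2 :
    pstep u u' -> pstep (PCon x M (l1 ++ u :: l2)) (PCon x M (l1 ++ u' :: l2)).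

Definition pnormal (t : pterm) : Prop := ~ exists u, pstep t u.

Fixpoint dec (t : pterm) : term :=
  match t with
  | PVar x => Var x
  | PApp u v => App (dec u) (dec v)
  | PCon x M args =>
      subst (fun y => nth (Var y) (map dec args) (index y (FV (Lam x M))))
            (Lam x M)
  end.

(* Main.v *)
Require Import Defs.
From mathcomp Require Import all_boot.

Fixpoint nsub (s : nat -> term) (M : term) : term :=
  match M with
  | Var x => s x
  | App M N => App (nsub s M) (nsub s N)
  | Lam y M' => Lam y (nsub (fun w => if w == y then Var y else s w) M')
  end.

Lemma FV_mem M w : (w \in FV M) = (w \in fvs M).
Proof. by rewrite /FV mem_sort mem_undup. Qed.

Lemma nsub_ext M : forall s s', (forall w, w \in fvs M -> s w = s' w) ->
  nsub s M = nsub s' M.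
Proof.
elim: M => [x|y M IH|M IHM N IHN] s s' H /=.
- by apply: H; rewrite inE.
- congr Lam; apply: IH => w Hw; case: eqP => // /eqP ne.
  by apply: H; rewrite mem_filter ne.
- by rewrite (IHM s s') ?(IHN s s') // => w Hw; apply: H; rewrite mem_cat Hw ?orbT.
Qed.

Lemma nsub_id M : forall s, (forall w, w \in fvs M -> s w = Var w) -> nsub s M = M.
Proof.
elim: M => [x|y M IH|M IHM N IHN] s H /=.
- by apply: H; rewrite inE.
- congr Lam; apply: IH => w Hw; case: eqP => [->//|/eqP ne].
  by apply: H; rewrite mem_filter ne.
- by rewrite IHM ?IHN // => w Hw; apply: H; rewrite mem_cat Hw ?orbT.
Qed.

Lemma nsub_closed N s : fvs N = [::] -> nsub s N = N.
Proof. by move=> H; apply: nsub_id => w; rewrite H. Qed.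

Lemma fvs_nsub M : forall s w, w \in fvs (nsub s M) ->
  exists2 v, v \in fvs M & w \in fvs (s v).
Proof.
elim: M => [x|y M IH|M IHM N IHN] s w /=.
- by move=> H; exists x; rewrite ?inE.
- rewrite mem_filter => /andP [ne /IH [v Hv]] /=. idtac.
  case: ifP => [/eqP ev | nv]; first by rewrite inE (negbTE ne).
  by move=> Hw; exists v => //; rewrite mem_filter nv.
- rewrite mem_cat => /orP [/IHM|/IHN] [v Hv Hw]; exists v => //;
  by rewrite mem_cat Hv ?orbT.
Qed.

Lemma closed_nsub M s : (forall w, w \in fvs M -> fvs (s w) = [::]) ->
  fvs (nsub s M) = [::].
Proof.
move=> H; case E: (fvs (nsub s M)) => [|a l] //.
have : a \in fvs (nsub s M) by rewrite E inE eqxx.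
by case/fvs_nsub => v /H ->.
Qed.

Lemma subst_nsub M : forall s,
  (forall w, w \in fvs M -> fvs (s w) = [::] \/ s w = Var w) -> subst s M = nsub s M.
Proof.
elim: M => [x|y M IH|M IHM N IHN] s H //=.
- have Hy : y \notin flatten [seq fvs (s w) | w <- FV (Lam y M)].
    apply/negP => /flattenP [l /mapP [w Hw ->] Hyw].
    move: Hw; rewrite FV_mem => Hw.
    case: (H w Hw) => E; first by rewrite E in Hyw.
    move: Hyw; rewrite E inE => /eqP ey; subst w.
    by move: Hw; rewrite mem_filter eqxx.
  rewrite (negbTE Hy); congr Lam; apply: IH => w Hw.
  case: ifP => [/eqP ->|ne]; first by right.
  by apply: H; rewrite mem_filter ne.
- by rewrite IHM ?IHN // => w Hw; apply: H; rewrite mem_cat Hw ?orbT.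
Qed.

Lemma nsub_comp M : forall sg tau th,
  (forall w, w \in fvs M -> (fvs (sg w) = [::] /\ th w = sg w) \/
                            (sg w = Var w /\ th w = tau w)) ->
  nsub tau (nsub sg M) = nsub th M.
Proof.
elim: M => [x|y M IH|M IHM N IHN] sg tau th H /=.
- have := H x; rewrite inE eqxx => /(_ isT) [[E ->]|[-> ->]] //; exact: nsub_closed.
- congr Lam; apply: IH => w Hw; case: ifP => [/eqP ->|ne]; first by right.
  by apply: H; rewrite mem_filter ne.
- by rewrite (IHM _ _ th) ?(IHN _ _ th) // => w Hw; apply: H; rewrite mem_cat Hw ?orbT.
Qed.

Fixpoint InP (t : pterm) (l : seq pterm) : Prop :=
  match l with [::] => False | a :: l' => a = t \/ InP t l' end.

Lemma InP_nth l d i : i < size l -> InP (nth d l i) l.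
Proof. elim: l i => //= a l IH [|i] /=; auto. Qed.

Lemma all_In (a : pred pterm) l t : all a l -> InP t l -> a t.
Proof. elim: l => //= b l IH /andP [ha hl] [<-|/IH]; auto. Qed.

Section PInd.
Variable P : pterm -> Prop.
Hypothesis HV : forall n, P (PVar n).
Hypothesis HA : forall u v, P u -> P v -> P (PApp u v).
Hypothesis HC : forall x M l, (forall t, InP t l -> P t) -> P (PCon x M l).
Fixpoint pt_ind (t : pterm) : P t :=
  match t with
  | PVar n => HV n
  | PApp u v => @HA u v (pt_ind u) (pt_ind v)
  | PCon x M l => @HC x M l
      ((fix go (l : seq pterm) : forall t, InP t l -> P t :=
         match l with
         | [::] => fun t H => False_ind _ H
         | a :: l' => fun t H => match H with
                                 | or_introl e => eq_ind a P (pt_ind a) t e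
                                 | or_intror H' => go l' t H'
                                 end
         end) l)
  end.
End PInd.


Lemma nth_idx_map (f : nat -> term) s w d : w \in s -> nth d (map f s) (index w s) = f w.
Proof. by move=> H; rewrite (nth_map w) ?index_mem // nth_index. Qed.

Definition sig0 (us : seq pterm) x M y :=
  nth (Var y) (map dec us) (index y (FV (Lam x M))).

Lemma cons_closed t : is_cons t -> fvs (dec t) = [::].
Proof.
elim/pt_ind: t => // x M us IH /= /andP [/eqP Hs Ha].
have Hc : forall w, w \in fvs (Lam x M) -> fvs (sig0 us x M w) = [::].
  move=> w; rewrite -FV_mem -index_mem -Hs => Hi.
  rewrite /sig0 (nth_map (PVar w)) //; apply: IH; first exact: InP_nth.
  by move/(all_nthP (PVar w)): Ha; apply.
change (fvs (subst (sig0 us x M) (Lam x M)) = [::]).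
rewrite subst_nsub; last by move=> w /Hc; left.
by apply: closed_nsub.
Qed.

Fixpoint good (t : pterm) : bool :=
  match t with
  | PVar _ => false
  | PApp u v => good u && good v
  | PCon x M us => is_cons (PCon x M us)
  end.

Lemma sig0_closed x M us : is_cons (PCon x M us) ->
  forall w, w \in fvs (Lam x M) -> fvs (sig0 us x M w) = [::] /\
     sig0 us x M w = dec (nth (PVar w) us (index w (FV (Lam x M)))).
Proof.
move=> Hc w; rewrite -FV_mem -index_mem => Hi.
move: Hc => /= /andP [/eqP Hs Ha]; rewrite -Hs in Hi.
rewrite /sig0 (nth_map (PVar w)) //; split => //; apply: cons_closed.
by move/(all_nthP (PVar w)): Ha; apply.
Qed.

Lemma dec_con x M us : is_cons (PCon x M us) ->
  dec (PCon x M us) = Lam x (nsub (fun w => if w == x then Var x else sig0 us x M w) M).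
Proof.
move=> Hc; change (subst (sig0 us x M) (Lam x M) = Lam x (nsub (fun w => if w == x then Var x else sig0 us x M w) M)).
rewrite subst_nsub //; by move=> w /(@sig0_closed x M us Hc) [? _]; left.
Qed.

Lemma all_InP (a b : pred pterm) l : all a l -> (forall t, InP t l -> a t -> b t) -> all b l.
Proof. elim: l => //= c l IH /andP [ha hl] H; rewrite H ?IH //; auto. Qed.

Lemma cons_pwf t : is_cons t -> pwf t.
Proof.
elim/pt_ind: t => // x M us IH /= /andP [-> Ha] /=.
exact: (@all_InP is_cons pwf us Ha IH).
Qed.

Lemma good_pwf t : good t -> pwf t.
Proof. elim: t => [//|u IHu v IHv /= /andP [/IHu -> /IHv ->]//| x M us]; exact: cons_pwf. Qed.

Lemma good_cons_val t : good t -> is_value (dec t) -> is_cons t.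
Proof. by case: t => //= x M us H _. Qed.

Lemma dec_PCon x M us : dec (PCon x M us) = subst (sig0 us x M) (Lam x M).
Proof. by []. Qed.

Lemma dec_enc M : dec (enc M) = M.
Proof.
elim: M => [//|x M _|M IHM N IHN]; last by rewrite /= IHM IHN.
rewrite [enc _]/= dec_PCon subst_nsub; last first.
  move=> w Hw; right; rewrite /sig0 -!map_comp nth_idx_map //; by rewrite FV_mem.
apply: nsub_id => w Hw; rewrite /sig0 -!map_comp nth_idx_map //; by rewrite FV_mem.
Qed.

Lemma good_enc M rho : (forall w, w \in fvs M -> is_cons (rho w)) ->
  good (psubst rho (enc M)).
Proof.
elim: M => [x|x M IH|M IHM N IHN] H /=.
- by have := H x; rewrite inE eqxx => /(_ isT); case: (rho x).
- rewrite -map_comp size_map eqxx /= all_map; apply/allP => w Hw /=.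
  by apply: H; rewrite -FV_mem.
- rewrite IHM ?IHN // => w Hw; apply: H; rewrite mem_cat Hw ?orbT //.
Qed.

Lemma dec_penc M rho : (forall w, w \in fvs M -> is_cons (rho w)) ->
  dec (psubst rho (enc M)) = nsub (fun w => dec (rho w)) M.
Proof.
elim: M => [x|x M IH|M IHM N IHN] H //.
- rewrite [psubst _ _]/= dec_PCon subst_nsub; last first.
    move=> w Hw; left; rewrite /sig0 -!map_comp nth_idx_map ?FV_mem //=.
    exact/cons_closed/H.
  apply: nsub_ext => w Hw; rewrite /sig0 -!map_comp nth_idx_map ?FV_mem //.
- rewrite /= IHM ?IHN // => w Hw; apply: H; rewrite mem_cat Hw ?orbT //.
Qed.

Definition rho x M us v := fun y => if y == x then v
                            else nth (PVar y) us (index y (FV (Lam x M))).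

Lemma rho_cons x M us v : is_cons (PCon x M us) -> is_cons v ->
  forall w, w \in fvs M -> is_cons (rho x M us v w).
Proof.
move=> Hc Hv w Hw; rewrite /rho; case: ifP => // ne.
have : w \in fvs (Lam x M) by rewrite /= mem_filter ne.
rewrite -FV_mem -index_mem; move: Hc => /= /andP [/eqP Hs Ha]; rewrite -Hs => Hi.
by move/(all_nthP (PVar w)): Ha; apply.
Qed.

Lemma cons_val v : is_cons v -> is_value (dec v).
Proof. by case: v => // x M us Hc; rewrite dec_con. Qed.

Lemma beta_eq x M us v : is_cons (PCon x M us) -> is_cons v ->
  subst1 (nsub (fun w => if w == x then Var x else sig0 us x M w) M) x (dec v)
  = dec (psubst (rho x M us v) (enc M)).
Proof.
move=> Hc Hv; rewrite dec_penc; last exact: rho_cons.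
rewrite /subst1 subst_nsub; last first.
  by move=> w _; case: ifP => _; [left; exact: cons_closed | right].
apply: nsub_comp => w Hw; rewrite /rho.
case: (eqVneq w x) => [->|ne]; first by right => /=; rewrite ?eqxx.
left => /=; rewrite ?(negbTE ne).
have Hw' : w \in fvs (Lam x M) by rewrite /= mem_filter ne.
by have [A B] := @sig0_closed x M us Hc w Hw'.
Qed.

Lemma cons_nostep t t' : pstep t t' -> is_cons t -> False.
Proof.
elim => // x M l1 u u' l2 _ IH /= /andP [_].
by rewrite all_cat /= => /and3P [_ /IH].
Qed.

Lemma fwd t t' : pstep t t' -> good t -> vstep (dec t) (dec t') /\ good t'.
Proof.
elim=> [x M us v Hs Ha Hv|u u' v H IH|u v v' H IH|x M l1 u u' l2 H _].
- move=> _; have Hc : is_cons (PCon x M us) by rewrite /= Hs eqxx Ha.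
  split; last by apply: (@good_enc _ (rho x M us v)); exact: rho_cons.
  rewrite -[psubst _ _]/(psubst (rho x M us v) (enc M)) -beta_eq //.
  change (vstep (App (dec (PCon x M us)) (dec v))
    (subst1 (nsub (fun w => if w == x then Var x else sig0 us x M w) M) x (dec v))).
  rewrite dec_con //; apply: vstep_beta; exact: cons_val.
- move=> /= /andP [/IH [Hs gu'] gv]; split; [exact: vstep_appL | by rewrite /= gu' gv].
- move=> /= /andP [gu /IH [Hs gv']]; split; [exact: vstep_appR | by rewrite /= gu gv'].
- move=> Hg; exfalso; exact: cons_nostep (pstep_con x M l1 l2 H) Hg.
Qed.

Lemma back t : forall N', good t -> vstep (dec t) N' ->
  exists t', pstep t t' /\ good t' /\ dec t' = N'.
Proof.
elim: t => [n|u IHu v IHv|x M us] N' //.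
- move=> /= /andP [gu gv] H; move E: (App (dec u) (dec v)) H => T H.
  case: H E => [x0 M0 V0 HV|M1 N1 L H1|M1 N1 L H1] [Eu Ev].
  + case: u gu IHu Eu => [n|u1 u2|x1 M1 us1] gu _ Eu //.
    rewrite dec_con // in Eu; case: Eu => <- <-.
    have Hv : is_cons v by apply: good_cons_val; rewrite // Ev.
    rewrite -Ev; exists (psubst (rho x1 M1 us1 v) (enc M1)); split.
      by move: gu => /= /andP [/eqP Hs Ha]; apply: pstep_rule.
    split; [apply: (@good_enc _ (rho x1 M1 us1 v)); exact: rho_cons | by rewrite beta_eq].
  + rewrite -Eu in H1; have [u' [st [gu' du']]] := IHu N1 gu H1.
    exists (PApp u' v); split; [exact: pstep_appL|split; [by rewrite /= gu' gv| by rewrite /= du' Ev]].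
  + rewrite -Ev in H1; have [v' [st [gv' dv']]] := IHv N1 gv H1.
    exists (PApp u v'); split; [exact: pstep_appR|split; [by rewrite /= gu gv'| by rewrite /= dv' Eu]].
- move=> Hc; rewrite dec_con // => H; inversion H.
Qed.

Lemma norm_equiv t : good t -> (pnormal t <-> vnormal (dec t)).
Proof.
move=> g; split.
- move=> Hp [N' H]; have [t' [st _]] := back t N' g H; apply: Hp; by exists t'.
- move=> Hv [t' H]; have [st _] := fwd t t' H g; apply: Hv; by exists (dec t').
Qed.

Lemma fwd_n n t t' : nsteps pstep n t t' -> good t ->
  nsteps vstep n (dec t) (dec t') /\ good t'.
Proof.
elim => [a|k a b c H _ IH] g; first by split; [constructor|].
have [H1 gb] := fwd a b H g; have [H2 gc] := IH gb.
split => //; exact: nstepsS H1 H2.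
Qed.

Lemma back_n n a N : nsteps vstep n a N -> forall t, good t -> dec t = a ->
  exists t', good t' /\ nsteps pstep n t t' /\ dec t' = N.
Proof.
elim => [b|k b c d H _ IH] t g E; first by exists t; split => //; split => //; constructor.
rewrite -E in H; have [t1 [st [g1 d1]]] := back t c g H.
have [t' [g' [st' d']]] := IH t1 g1 d1.
exists t'; split => //; split => //; exact: nstepsS st st'.
Qed.

Lemma psubst_enc M : psubst PVar (enc M) = enc M.
Proof. by elim: M => //= [x M _|M -> N ->] //; rewrite -map_comp. Qed.

Lemma closed_good M : closed_term M -> good (enc M).
Proof.
move=> H; rewrite -psubst_enc; apply: good_enc => w; by rewrite -FV_mem H.
Qed.

Theorem theorem1 (M N : term) (n : nat) :
  closed_term M ->
  ((nsteps vstep n M N /\ vnormal N) <->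
   (exists t : pterm, pwf t /\ nsteps pstep n (enc M) t /\ pnormal t /\ dec t = N)).
Proof.
move=> Hc; have g := closed_good M Hc; split.
- move=> [H Hn]; have [t' [g' [st d']]] := back_n n M N H (enc M) g (dec_enc M).
  exists t'; split; first exact: good_pwf.
  split => //; split => //; apply/(norm_equiv t' g'); by rewrite d'.
- move=> [t [_ [st [Hp <-]]]]; have [H g'] := fwd_n n (enc M) t st g.
  rewrite dec_enc in H; split => //; exact/(norm_equiv t g').
Qed.
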